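(* Let $d\ge 1$, let $\Omega=\operatorname{diag}(\omega_j)_{j=1}^d\in\mathbb{R}^{d\times d}$ with all $\omega_j\ge 0$, let $\omega=\min_{j:\,\omega_j>0}\omega_j$ be the smallest nonzero frequency, and let $A\in\mathbb{C}^{d\times d}$ be self-adjoint. Let $0<h\le 1$ and let $\psi_1,\phi\colon\mathbb{R}\to\mathbb{R}$ be even functions such that for constants $c_0,c_1\ge0$ \[ |\psi_1(\xi)|\le c_0,\qquad |\phi(\xi)|\le c_0,\qquad |\phi(\xi)-1|\le c_1|\xi|\qquad\text{for all }\xi\in\mathbb{R}. \] Set $\Psi_1=\psi_1(h\Omega)$, $\Phi=\phi(h\Omega)$, and define for $q,\dot q\in\mathbb{C}^d$ \[ \mathcal{H}(q,\dot{q}) = \tfrac12 \|\Omega q\|^2 + \tfrac12 \|\dot{q}\|^2 + \tfrac12 \operatorname{Re}\big((\cos(h\Omega) \Phi q)^* A \Phi q\big) - \tfrac18 h^2 \|\Psi_1 A \Phi q\|^2, \] \[ H(q,\dot q)=\tfrac12 \|\Omega q\|^2 + \tfrac12 \|\dot{q}\|^2 + \tfrac12 q^*Aq . \] Then for all $q,\dot q\in\mathbb{C}^d$, \begin{align*} \big|\mathcal{H}(q,\dot{q}) - \tfrac12 \|\Omega q\|^2 - \tfrac12 \|\dot{q}\|^2\big| &\le \big(\breve{C}+\widehat{C} h^2\big) \|q\|^2, \\ \big|\mathcal{H}(q,\dot{q}) - H(q,\dot{q})\big| &\le \widetilde{C} \min\big(h,\omega^{-1}\big) \|q\| \, \|\Omega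 q\| + \widehat{C} h^2 \|q\|^2 \end{align*} with $\breve{C} = \tfrac12 c_0^2 \|A\|$, $\widehat{C} = \tfrac18 c_0^4 \|A\|^2$ and $\widetilde{C} = \tfrac12 \big(2 c_0^2 + (c_0+1)\max(c_0+1,c_1)\big) \|A\|$.
   Context: $\|\cdot\|$ is the Euclidean norm on $\mathbb{C}^d$ and, for matrices, the induced operator norm; ${}^*$ denotes conjugate transpose. For a function $f\colon\mathbb{R}\to\mathbb{R}$, $f(h\Omega)$ denotes the diagonal matrix $\operatorname{diag}(f(h\omega_j))_{j=1}^d$. *)

(* Defs.v *)
From mathcomp Require Import all_boot all_order all_algebra.
From mathcomp Require Import complex.
From mathcomp Require Import classical_sets reals trigo.
Set Implicit Arguments. Unset Strict Implicit. Unset Printing Implicit Defensive.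
Import Order.TTheory GRing.Theory Num.Theory.
Local Open Scope ring_scope.
Local Open Scope complex_scope.

Section Defs.
Variable R : realType.
Local Notation C := R[i].

Definition vnorm2 d (v : 'cV[C]_d) : R :=
  \sum_(i < d) ((complex.Re (v i 0)) ^+ 2 + (complex.Im (v i 0)) ^+ 2).

Definition vnorm d (v : 'cV[C]_d) : R := Num.sqrt (vnorm2 v).

Definition opnorm d (M : 'M[C]_d) : R :=
  sup [set vnorm (M *m x) | x in [set x : 'cV[C]_d | vnorm x <= 1]]%classic.

Definition adj m n (M : 'M[C]_(m, n)) : 'M[C]_(n, m) := map_mx Num.conj (M^T).

Definition selfadjoint d (M : 'M[C]_d) : Prop := adj M = M.

Definition diagC d (v : 'I_d -> R) : 'M[C]_d := diag_mx (\row_j (v j)%:C).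

Definition fdiag d (f : R -> R) (h : R) (w : 'I_d -> R) : 'M[C]_d :=
  diagC (fun j => f (h * w j)).

(* min(h, omega^{-1}) where omega is the smallest nonzero frequency;
   if there is no nonzero frequency, omega^{-1} = +oo by convention, so this is h *)
Definition inv_omega d (w : 'I_d -> R) : R :=
  \big[Num.max/0]_(j < d | 0 < w j) (w j)^-1.
Definition hmin d (h : R) (w : 'I_d -> R) : R :=
  if [exists j, 0 < w j] then Num.min h (inv_omega w) else h.

Definition reform d (u : 'cV[C]_d) (M : 'M[C]_d) (v : 'cV[C]_d) : R :=
  complex.Re ((adj u *m M *m v) 0 0).

Definition modH d (w : 'I_d -> R) (A : 'M[C]_d) (psi1 phi : R -> R) (h : R)
    (q qd : 'cV[C]_d) : R :=
  let Om := diagC w in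
  let Phi := fdiag phi h w in
  let Psi1 := fdiag psi1 h w in
  let Cos := fdiag cos h w in
  (vnorm (Om *m q)) ^+ 2 / 2 + (vnorm qd) ^+ 2 / 2
  + reform (Cos *m Phi *m q) A (Phi *m q) / 2
  - h ^+ 2 / 8 * (vnorm (Psi1 *m A *m Phi *m q)) ^+ 2.

(* energy H; q^* A q is real for self-adjoint A, we take its real part *)
Definition energyH d (w : 'I_d -> R) (A : 'M[C]_d) (q qd : 'cV[C]_d) : R :=
  (vnorm (diagC w *m q)) ^+ 2 / 2 + (vnorm qd) ^+ 2 / 2 + reform q A q / 2.

End Defs.

(* Main.v *)
Require Import Defs.
From mathcomp Require Import all_boot all_order all_algebra.
From mathcomp Require Import complex.
From mathcomp Require Import classical_sets reals trigo.
From mathcomp Require Import all_classical all_reals all_analysis.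
From mathcomp Require Import lra ring.
Import Order.TTheory GRing.Theory Num.Theory.
Local Open Scope ring_scope.
Local Open Scope complex_scope.
Import numFieldNormedType.Exports.
Set Implicit Arguments. Unset Strict Implicit.

Section S.
Variable R : realType.
Local Notation C := R[i].

Definition sq (z : C) : R := complex.Re z ^+ 2 + complex.Im z ^+ 2.

Lemma sq_ge0 z : 0 <= sq z.
Proof. by rewrite /sq addr_ge0 // sqr_ge0. Qed.

Lemma sqM (a : R) (z : C) : sq (a%:C * z) = a ^+ 2 * sq z.
Proof. case: z => x y; rewrite /sq /=; ring. Qed.

Lemma ReJM (z u : C) : complex.Re (Num.conj z * u) =
  complex.Re z * complex.Re u + complex.Im z * complex.Im u.
Proof. case: z => a b; case: u => c e /=; ring. Qed.

Lemma CS d (a1 a2 b1 b2 : 'I_d -> R) :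
  (\sum_i (a1 i * b1 i + a2 i * b2 i)) ^+ 2 <=
  (\sum_i (a1 i ^+ 2 + a2 i ^+ 2)) * (\sum_i (b1 i ^+ 2 + b2 i ^+ 2)).
Proof.
set B := \sum_i _; set A := \sum_i _; set D := \sum_i _.
have A0 : 0 <= A by apply: sumr_ge0 => i _; rewrite addr_ge0 // sqr_ge0.
have D0 : 0 <= D by apply: sumr_ge0 => i _; rewrite addr_ge0 // sqr_ge0.
have key t : 0 <= t ^+ 2 * A + 2 * t * B + D.
  have -> : t ^+ 2 * A + 2 * t * B + D =
      \sum_i ((a1 i * t + b1 i) ^+ 2 + (a2 i * t + b2 i) ^+ 2).
    rewrite /A /B /D !mulr_sumr -!big_split /=; apply: eq_bigr => i _; ring.
  by apply: sumr_ge0 => i _; rewrite addr_ge0 // sqr_ge0.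
move: A0; rewrite le_eqVlt => /orP[/eqP A0|Apos].
  have : forall i, a1 i ^+ 2 + a2 i ^+ 2 = 0.
    move=> i; apply: (psumr_eq0P _ (esym A0)) => // j _.
    by rewrite addr_ge0 // sqr_ge0.
  move=> H; have -> : B = 0.
    rewrite /B big1 // => i _.
    have /eqP := H i; rewrite paddr_eq0 ?sqr_ge0 // !sqrf_eq0 => /andP[/eqP -> /eqP ->].
    by rewrite !mul0r addr0.
  by rewrite expr0n /= mulr_ge0 // -A0.
pose s := B / A.
have hB : B = s * A by rewrite /s divfK // gt_eqF.
have := key (- s); rewrite hB => k.
nra.
Qed.

Lemma sq_le (x y : R) : `|x| <= y -> x ^+ 2 <= y ^+ 2.
Proof.
move=> h; have y0 : 0 <= y := le_trans (normr_ge0 x) h.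
move: h; rewrite ler_norml => /andP[h1 h2]; nra.
Qed.

Lemma normK (x : R) : `|x| ^+ 2 = x ^+ 2.
Proof. exact: real_normK (num_real _). Qed.

Lemma Re_sum d (F : 'I_d -> C) : complex.Re (\sum_i F i) = \sum_i complex.Re (F i).
Proof.
apply: (big_morph (@complex.Re R)) => //.
by case=> a b; case=> c e.
Qed.

Lemma Im_sum d (F : 'I_d -> C) : complex.Im (\sum_i F i) = \sum_i complex.Im (F i).
Proof.
apply: (big_morph (@complex.Im R)) => //.
by case=> a b; case=> c e.
Qed.

Lemma vnorm2E d (v : 'cV[C]_d) : vnorm2 v = \sum_i sq (v i 0).
Proof. by []. Qed.

Lemma vnorm2_ge0 d (v : 'cV[C]_d) : 0 <= vnorm2 v.
Proof. by apply: sumr_ge0 => i _; exact: sq_ge0. Qed.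

Lemma vnorm_ge0 d (v : 'cV[C]_d) : 0 <= vnorm v.
Proof. exact: sqrtr_ge0. Qed.

Lemma vnormK d (v : 'cV[C]_d) : vnorm v ^+ 2 = vnorm2 v.
Proof. by rewrite /vnorm sqr_sqrtr // vnorm2_ge0. Qed.

Lemma vnorm_le_gen d (u v : 'cV[C]_d) K : 0 <= K ->
  (forall i, sq (u i 0) <= K ^+ 2 * sq (v i 0)) -> vnorm u <= K * vnorm v.
Proof.
move=> K0 H; rewrite /vnorm -(ger0_norm K0) -sqrtr_sqr -sqrtrM ?sqr_ge0 //.
apply: ler_wsqrtr; rewrite !vnorm2E mulr_sumr; apply: ler_sum => i _; exact: H.
Qed.

Lemma diag_entry d (f : 'I_d -> R) (v : 'cV[C]_d) i :
  (diagC f *m v) i 0 = (f i)%:C * v i 0.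
Proof. by rewrite /diagC mul_diag_mx !mxE. Qed.

Lemma vnorm_diag d (f g : 'I_d -> R) K (v : 'cV[C]_d) : 0 <= K ->
  (forall i, `|f i| <= K * `|g i|) ->
  vnorm (diagC f *m v) <= K * vnorm (diagC g *m v).
Proof.
move=> K0 H; apply: vnorm_le_gen => // i.
rewrite !diag_entry !sqM mulrA ler_wpM2r ?sq_ge0 //.
by rewrite -[g i ^+ 2]normK -exprMn; apply: sq_le; exact: H.
Qed.

Lemma diag1 d (v : 'cV[C]_d) : diagC (fun _ => 1) *m v = v.
Proof. by apply/matrixP => i j; rewrite ord1 diag_entry mul1r. Qed.

Lemma vnorm_diag1 d (f : 'I_d -> R) K (v : 'cV[C]_d) : 0 <= K ->
  (forall i, `|f i| <= K) -> vnorm (diagC f *m v) <= K * vnorm v.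
Proof.
move=> K0 H; rewrite -{2}(@diag1 _ v); apply: vnorm_diag => // i.
by rewrite normr1 mulr1.
Qed.

Lemma reform_le d (u : 'cV[C]_d) M v :
  `|reform u M v| <= vnorm u * vnorm (M *m v).
Proof.
rewrite /reform -mulmxA mxE Re_sum.
set y := M *m v.
have E k : (adj u) 0 k = Num.conj (u k 0) by rewrite /adj !mxE.
under eq_bigr => k _ do rewrite E ReJM.
rewrite /vnorm -sqrtrM ?vnorm2_ge0 // -sqrtr_sqr; apply: ler_wsqrtr.
exact: CS.
Qed.

Lemma ReM (z u : C) : complex.Re (z * u) =
  complex.Re z * complex.Re u + (- complex.Im z) * complex.Im u.
Proof. case: z => a b; case: u => c e /=; ring. Qed.

Lemma ImM (z u : C) : complex.Im (z * u) =
  complex.Re z * complex.Im u + complex.Im z * complex.Re u.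
Proof. case: z => a b; case: u => c e /=; ring. Qed.

Lemma vnorm_scale d (k : R) (v : 'cV[C]_d) : vnorm (k%:C *: v) = `|k| * vnorm v.
Proof.
rewrite /vnorm -sqrtr_sqr -sqrtrM ?sqr_ge0 //; congr Num.sqrt.
rewrite !vnorm2E mulr_sumr; apply: eq_bigr => i _.
by rewrite mxE -sqM.
Qed.

Lemma vnorm0 d : vnorm (0 : 'cV[C]_d) = 0.
Proof.
rewrite /vnorm vnorm2E big1 ?sqrtr0 // => i _.
by rewrite mxE /sq /= expr0n /= addr0.
Qed.

Lemma vnorm_eq0 d (v : 'cV[C]_d) : vnorm v = 0 -> v = 0.
Proof.
move=> /eqP; rewrite /vnorm sqrtr_eq0 => h.
have h0 : vnorm2 v = 0 by apply/eqP; rewrite eq_le h vnorm2_ge0.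
apply/matrixP => i j; rewrite ord1 mxE.
have := psumr_eq0P (fun i _ => sq_ge0 (v i 0)) h0 (i := i) isT.
rewrite /sq; case: (v i 0) => a b /= /eqP.
rewrite paddr_eq0 ?sqr_ge0 // !sqrf_eq0 => /andP[/eqP -> /eqP ->] //.
Qed.

Lemma vnorm2_le1 d (v : 'cV[C]_d) : vnorm v <= 1 -> vnorm2 v <= 1.
Proof.
move=> h; rewrite -vnormK -(expr1n _ 2%N); apply: sq_le.
by rewrite ger0_norm // vnorm_ge0.
Qed.

Lemma entry_bound d (M : 'M[C]_d) (x : 'cV[C]_d) i :
  sq ((M *m x) i 0) <= 2 * (\sum_j sq (M i j)) * vnorm2 x.
Proof.
rewrite mxE /sq Re_sum Im_sum.
under eq_bigr => j _ do rewrite ReM.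
under [X in _ + X ^+ 2]eq_bigr => j _ do rewrite ImM.
have h1 := CS (fun j => complex.Re (M i j)) (fun j => - complex.Im (M i j))
  (fun j => complex.Re (x j 0)) (fun j => complex.Im (x j 0)).
have h2 := CS (fun j => complex.Re (M i j)) (fun j => complex.Im (M i j))
  (fun j => complex.Im (x j 0)) (fun j => complex.Re (x j 0)).
simpl in h1, h2.
have e1 : \sum_j (complex.Re (M i j) ^+ 2 + (- complex.Im (M i j)) ^+ 2) =
  \sum_j (complex.Re (M i j) ^+ 2 + complex.Im (M i j) ^+ 2).
  by apply: eq_bigr => j _; rewrite sqrrN.
have e2 : \sum_j (complex.Im (x j 0) ^+ 2 + complex.Re (x j 0) ^+ 2) =
  \sum_j (complex.Re (x j 0) ^+ 2 + complex.Im (x j 0) ^+ 2).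
  by apply: eq_bigr => j _; rewrite addrC.
rewrite e1 in h1; rewrite e2 in h2.
rewrite vnorm2E; rewrite /sq; lra.
Qed.

Lemma mx_bound d (M : 'M[C]_d) (x : 'cV[C]_d) : vnorm x <= 1 ->
  vnorm (M *m x) <= Num.sqrt (2 * \sum_i \sum_j sq (M i j)).
Proof.
move=> /vnorm2_le1 h; rewrite /vnorm; apply: ler_wsqrtr.
rewrite vnorm2E mulr_sumr; apply: ler_sum => i _.
apply: le_trans (entry_bound M x i) _.
rewrite -[X in _ <= X]mulr1 ler_wpM2l // mulr_ge0 //.
by apply: sumr_ge0 => j _; exact: sq_ge0.
Qed.

Lemma opnorm_le d (M : 'M[C]_d) (v : 'cV[C]_d) :
  vnorm (M *m v) <= opnorm M * vnorm v.
Proof.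
have [/vnorm_eq0 ->|] := eqVneq (vnorm v) 0.
  by rewrite mulmx0 vnorm0 mulr0.
move=> s0; have spos : 0 < vnorm v by rewrite lt_def s0 vnorm_ge0.
set s := vnorm v in s0 spos *.
pose x := (s^-1)%:C *: v.
have hx : vnorm x = 1 by rewrite vnorm_scale /s ger0_norm ?invr_ge0 ?ltW // mulVf.
have hub : has_ubound [set vnorm (M *m x) | x in [set x : 'cV[C]_d | vnorm x <= 1]]%classic.
  exists (Num.sqrt (2 * \sum_i \sum_j sq (M i j))) => _ [y hy <-].
  exact: mx_bound.
have h : vnorm (M *m x) <= opnorm M.
  rewrite /opnorm; apply: (ub_le_sup hub).
  by exists x => //; rewrite /= hx.
move: h; have -> : vnorm (M *m x) = s^-1 * vnorm (M *m v).
  by rewrite /x -scalemxAr vnorm_scale ger0_norm // invr_ge0 ltW.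
have si : 0 < s^-1 by rewrite invr_gt0.
move=> h; rewrite -(ler_pM2l si) (mulrC (opnorm M)) mulrA mulVf // mul1r //.
Qed.

Lemma opnorm_ub d (M : 'M[C]_d) (x : 'cV[C]_d) : vnorm x <= 1 ->
  vnorm (M *m x) <= opnorm M.
Proof.
move=> hx.
have hub : has_ubound [set vnorm (M *m x) | x in [set x : 'cV[C]_d | vnorm x <= 1]]%classic.
  exists (Num.sqrt (2 * \sum_i \sum_j sq (M i j))) => _ [y hy <-].
  exact: mx_bound.
rewrite /opnorm; apply: (ub_le_sup hub).
by exists x.
Qed.

Lemma opnorm_ge0 d (M : 'M[C]_d) : 0 <= opnorm M.
Proof.
have := @opnorm_ub d M 0; rewrite mulmx0 vnorm0; apply; exact: ler01.
Qed.

Lemma inv_omega_ge0 d (w : 'I_d -> R) : 0 <= inv_omega w.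
Proof. exact: bigmax_ge_id. Qed.

Lemma inv_omega_ge d (w : 'I_d -> R) j : 0 < w j -> (w j)^-1 <= inv_omega w.
Proof. move=> hj; exact: (le_bigmax_cond _ _ hj). Qed.

Lemma hmin_ge0 d (h : R) (w : 'I_d -> R) : 0 <= h -> 0 <= hmin h w.
Proof.
move=> h0; rewrite /hmin; case: ifP => // _.
by rewrite le_min h0 inv_omega_ge0.
Qed.

Lemma hm_bound d (h : R) (w : 'I_d -> R) K j (y : R) : 0 <= K -> 0 <= w j ->
  `|y| <= K * (h * w j) -> `|y| <= K -> `|y| <= K * hmin h w * `|w j|.
Proof.
move=> K0 wj0 h1 h2; rewrite (ger0_norm wj0) -mulrA.
rewrite /hmin; case: ifP => // _.
move: wj0; rewrite le_eqVlt => /orP[/eqP wj0|wjpos].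
  by move: h1; rewrite -wj0 !mulr0.
rewrite minEle; case: ifP => // _.
apply: (le_trans h2); rewrite -[X in X <= _]mulr1 ler_wpM2l //.
have := inv_omega_ge wjpos => hi.
rewrite -(@mulVf _ (w j)) ?gt_eqF // ler_wpM2r // ?ltW //.
Qed.

Lemma ReB (a b : C) : complex.Re (a - b) = complex.Re a - complex.Re b.
Proof. by case: a => ? ?; case: b => ? ?. Qed.

Lemma adjB d (x y : 'cV[C]_d) : adj (x - y) = adj x - adj y.
Proof.
apply/matrixP => i j; rewrite !mxE.
by case: (x j i) => ? ?; case: (y j i) => ? ? /=; congr Complex; rewrite opprD.
Qed.

Lemma reformBl d (x y : 'cV[C]_d) M v :
  reform (x - y) M v = reform x M v - reform y M v.
Proof. by rewrite /reform adjB !mulmxBl mxE [in X in _ + X]mxE ReB. Qed.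

Lemma reformBr d (u x y : 'cV[C]_d) M :
  reform u M (x - y) = reform u M x - reform u M y.
Proof. by rewrite /reform !mulmxBr mxE [in X in _ + X]mxE ReB. Qed.

Lemma diag_sub d (f g : 'I_d -> R) (v : 'cV[C]_d) :
  diagC f *m v - diagC g *m v = diagC (fun j => f j - g j) *m v.
Proof. by rewrite -mulmxBl; congr (_ *m _); apply/matrixP => i j; rewrite !mxE rmorphB /= -mulrnBl. Qed.

Lemma diag_mul d (f g : 'I_d -> R) :
  diagC f *m diagC g = diagC (fun j => f j * g j).
Proof. by rewrite /diagC mulmx_diag; congr diag_mx; apply/matrixP => i j; rewrite !mxE rmorphM. Qed.

Lemma arith1 (X B T1 T2 : R) : - B <= X -> X <= B -> T1 <= T2 -> 0 <= T1 ->
  `|X / 2 - T1 / 8| <= B / 2 + T2 / 8.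
Proof. move=> *; rewrite ler_norml; apply/andP; split; lra. Qed.

Lemma arith2 (X1 X2 X3 B1 B2 B3 T1 T2 : R) : - B1 <= X1 -> X1 <= B1 ->
  - B2 <= X2 -> X2 <= B2 -> - B3 <= X3 -> X3 <= B3 -> T1 <= T2 -> 0 <= T1 ->
  `|(X1 + X2 + X3) / 2 - T1 / 8| <= (B1 + B2 + B3) / 2 + T2 / 8.
Proof. move=> *; rewrite ler_norml; apply/andP; split; lra. Qed.

Lemma cos1_le (x : R) : `|cos x - 1| <= `|x|.
Proof.
rewrite -cos_norm.
have cc : {within `[0, `|x|], continuous (@cos R)}%classic.
  by apply: continuous_subspaceT => y; exact: continuous_cos.
have [c _] := @MVT_segment R cos (fun y => - sin y) 0 `|x| (normr_ge0 x)
  (fun y _ => is_derive_cos y) cc.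
rewrite cos0 => ->.
rewrite subr0 normrM normrN ger0_norm ?normr_ge0 //.
rewrite -[X in _ <= X]mul1r ler_wpM2r //; exact: sin_max.
Qed.

Lemma cos_sub1 (x : R) : `|cos x - 1| <= 2.
Proof.
apply: (le_trans (ler_normB _ _)); rewrite normr1.
have := cos_max x; lra.
Qed.
End S.

Unset Implicit Arguments. Set Strict Implicit.

Theorem lemma2 (R : realType) (d : nat) (w : 'I_d -> R) (A : 'M[R[i]]_d)
    (h c0 c1 : R) (psi1 phi : R -> R) :
  (0 < d)%N ->
  (forall j, 0 <= w j) ->
  selfadjoint A ->
  0 < h -> h <= 1 ->
  0 <= c0 -> 0 <= c1 ->
  (forall x, psi1 (- x) = psi1 x) ->
  (forall x, phi (- x) = phi x) ->
  (forall x, `|psi1 x| <= c0) ->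
  (forall x, `|phi x| <= c0) ->
  (forall x, `|phi x - 1| <= c1 * `|x|) ->
  let Cb := c0 ^+ 2 * opnorm A / 2 in
  let Ch := c0 ^+ 4 * (opnorm A) ^+ 2 / 8 in
  let Ct := (2 * c0 ^+ 2 + (c0 + 1) * Num.max (c0 + 1) c1) * opnorm A / 2 in
  forall q qd : 'cV[R[i]]_d,
    `|modH w A psi1 phi h q qd - (vnorm (diagC w *m q)) ^+ 2 / 2
        - (vnorm qd) ^+ 2 / 2| <= (Cb + Ch * h ^+ 2) * (vnorm q) ^+ 2
    /\
    `|modH w A psi1 phi h q qd - energyH w A q qd|
      <= Ct * hmin h w * vnorm q * vnorm (diagC w *m q) + Ch * h ^+ 2 * (vnorm q) ^+ 2.
Proof.
move=> _ w0 _ h0 h1 c00 c10 _ _ hpsi hphi hphi1 Cb Ch Ct q qd.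
rewrite /modH /energyH /=.
set P := fdiag phi h w; set Ps := fdiag psi1 h w; set Co := fdiag cos h w.
set pq := P *m q.
set a := opnorm A; set n := vnorm q; set no := vnorm (diagC w *m q).
have a0 : 0 <= a := opnorm_ge0 A.
have n0 : 0 <= n := vnorm_ge0 q.
have no0 : 0 <= no := vnorm_ge0 _.
have F1 : vnorm pq <= c0 * n by apply: vnorm_diag1.
have Fpq0 : 0 <= vnorm pq := vnorm_ge0 _.
have F2 : vnorm (A *m pq) <= a * (c0 * n).
  apply: (le_trans (opnorm_le A pq)); rewrite -/a.
have := ler_wpM2l a0 F1. by [].
have FA0 : 0 <= vnorm (A *m pq) := vnorm_ge0 _.
rewrite -[Co *m P *m q]mulmxA -/pq.
have F3 : vnorm (Co *m pq) <= c0 * n.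
  apply: le_trans F1; rewrite -[X in _ <= X]mul1r; apply: vnorm_diag1 => // i.
  exact: cos_max.
have B1 : `|reform (Co *m pq) A pq| <= (c0 * n) * (a * (c0 * n)).
  apply: (le_trans (reform_le _ _ _)); apply: ler_pM => //; exact: vnorm_ge0.
rewrite -[Ps *m A *m P *m q]mulmxA -[Ps *m A *m pq]mulmxA.
set N := vnorm (Ps *m (A *m pq)).
have BN : N <= c0 * (a * (c0 * n)).
  apply: (le_trans (y := c0 * vnorm (A *m pq))).
    by apply: vnorm_diag1 => // i; exact: hpsi.
  exact: (ler_wpM2l c00 F2).
have BN2 : h ^+ 2 * N ^+ 2 <= h ^+ 2 * (c0 * (a * (c0 * n))) ^+ 2.
  apply: ler_wpM2l; first exact: sqr_ge0.
  by apply: sq_le; rewrite ger0_norm // vnorm_ge0.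
have hN0 : 0 <= h ^+ 2 * N ^+ 2 by rewrite mulr_ge0 // sqr_ge0.
set r1 := reform (Co *m pq) A pq.
move: B1; rewrite -/r1 ler_norml => /andP[B1a B1b].
split.
  rewrite /Cb /Ch -/a.
  have -> : no ^+ 2 / 2 + vnorm qd ^+ 2 / 2 + r1 / 2 - h ^+ 2 / 8 * N ^+ 2 -
     no ^+ 2 / 2 - vnorm qd ^+ 2 / 2 = r1 / 2 - (h ^+ 2 * N ^+ 2) / 8 by ring.
  have -> : (c0 ^+ 2 * a / 2 + c0 ^+ 4 * a ^+ 2 / 8 * h ^+ 2) * n ^+ 2 =
     (c0 * n * (a * (c0 * n))) / 2 + (h ^+ 2 * (c0 * (a * (c0 * n))) ^+ 2) / 8 by ring.
  apply: arith1 => //.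
rewrite /Ct /Ch -/a.
set r0 := reform q A q.
have hm0 : 0 <= hmin h w by apply: hmin_ge0; exact: ltW.
set hm := hmin h w in hm0 *.
set Mx := Num.max (c0 + 1) c1.
have Mx1 : c0 + 1 <= Mx by rewrite le_max lexx.
have Mx2 : c1 <= Mx by rewrite le_max lexx orbT.
have D : r1 - r0 = reform (Co *m pq - pq) A pq + reform (pq - q) A pq
    + reform q A (pq - q).
  rewrite reformBl reformBl reformBr /r1 /r0; ring.
have E1 : Co *m pq - pq =
    diagC (fun j => cos (h * w j) * phi (h * w j) - phi (h * w j)) *m q.
  rewrite /pq mulmxA /Co /P /fdiag diag_mul; exact: diag_sub.
have E2 : pq - q = diagC (fun j => phi (h * w j) - 1) *m q.
  by rewrite -{1}(diag1 q) /pq /P /fdiag diag_sub.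
have hw0 j : 0 <= h * w j by rewrite mulr_ge0 // ltW.
have V1 : vnorm (Co *m pq - pq) <= (2 * c0 * hm) * no.
  rewrite E1; apply: vnorm_diag; first by rewrite !mulr_ge0 // ltW.
  move=> i; rewrite /hm; apply: hm_bound => //; first by rewrite mulr_ge0.
    have -> : cos (h * w i) * phi (h * w i) - phi (h * w i) =
      (cos (h * w i) - 1) * phi (h * w i) by ring.
    rewrite normrM; have := cos1_le (h * w i); rewrite (ger0_norm (hw0 i)) => hc.
    have := hphi (h * w i) => hp.
    have hc0 := normr_ge0 (cos (h * w i) - 1).
    have hp0 := normr_ge0 (phi (h * w i)).
    have := hw0 i; nra.
  have -> : cos (h * w i) * phi (h * w i) - phi (h * w i) =
    (cos (h * w i) - 1) * phi (h * w i) by ring.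
  rewrite normrM; have := cos_sub1 (h * w i) => hc.
  have := hphi (h * w i) => hp.
  have hc0 := normr_ge0 (cos (h * w i) - 1).
  have hp0 := normr_ge0 (phi (h * w i)).
  nra.
have V2 : vnorm (pq - q) <= (Mx * hm) * no.
  rewrite E2; apply: vnorm_diag; first by rewrite mulr_ge0 // (le_trans _ Mx1) // addr_ge0.
  have Mx0 : 0 <= Mx by rewrite (le_trans _ Mx1) // addr_ge0.
  move=> i; rewrite /hm; apply: hm_bound => //.
    have := hphi1 (h * w i); rewrite (ger0_norm (hw0 i)) => hp.
    apply: (le_trans hp); apply: ler_wpM2r => //.
  apply: (le_trans (ler_normB _ _)); rewrite normr1.
  apply: le_trans Mx1; rewrite lerD2r; exact: hphi.
have G1 : `|reform (Co *m pq - pq) A pq| <= (2 * c0 * hm * no) * (a * (c0 * n)).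
  apply: (le_trans (reform_le _ _ _)); apply: ler_pM => //; exact: vnorm_ge0.
have G2 : `|reform (pq - q) A pq| <= (Mx * hm * no) * (a * (c0 * n)).
  apply: (le_trans (reform_le _ _ _)); apply: ler_pM => //; exact: vnorm_ge0.
have G3 : `|reform q A (pq - q)| <= n * (a * (Mx * hm * no)).
  apply: (le_trans (reform_le _ _ _)); apply: ler_wpM2l => //.
  apply: (le_trans (opnorm_le A _)); rewrite -/a; exact: (ler_wpM2l a0 V2).
move: G1; rewrite ler_norml => /andP[G1a G1b].
move: G2; rewrite ler_norml => /andP[G2a G2b].
move: G3; rewrite ler_norml => /andP[G3a G3b].
have -> : no ^+ 2 / 2 + vnorm qd ^+ 2 / 2 + r1 / 2 - h ^+ 2 / 8 * N ^+ 2 -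
   (no ^+ 2 / 2 + vnorm qd ^+ 2 / 2 + r0 / 2) =
   (reform (Co *m pq - pq) A pq + reform (pq - q) A pq + reform q A (pq - q)) / 2
   - (h ^+ 2 * N ^+ 2) / 8 by rewrite -D; ring.
have -> : (2 * c0 ^+ 2 + (c0 + 1) * Mx) * a / 2 * hm * n * no +
   c0 ^+ 4 * a ^+ 2 / 8 * h ^+ 2 * n ^+ 2 =
   (2 * c0 * hm * no * (a * (c0 * n)) + Mx * hm * no * (a * (c0 * n))
    + n * (a * (Mx * hm * no))) / 2 + (h ^+ 2 * (c0 * (a * (c0 * n))) ^+ 2) / 8 by ring.
exact: arith2.
Qed.
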